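(* Consider two phases indexed by $\{1,2\}$ and a cell interface $x_{i+\frac12}$ separating a left cell $i$ and a right cell $i+1$. For $a,b\in\{1,2\}$ let $\mathcal{P}_{i+\frac12}[\Sigma_a,\Sigma_b]$ denote the probability of the event that phase $a$ is present immediately to the left of $x_{i+\frac12}$ and phase $b$ is present immediately to the right of $x_{i+\frac12}$ (exactly one phase is present on each side in every realization). Let $\alpha_j^p$, $p\in\{1,2\}$, $j\in\{i,i+1\}$, satisfy the saturation condition $\alpha_j^p\in[0,1]$, $\alpha_j^1+\alpha_j^2=1$, and assume that for every $p\neq q\in\{1,2\}$ $$\mathcal{P}_{i+\frac12}[\Sigma_p,\Sigma_p]+\mathcal{P}_{i+\frac12}[\Sigma_p,\Sigma_q]=\alpha_i^p,\qquad \mathcal{P}_{i+\frac12}[\Sigma_p,\Sigma_p]+\mathcal{P}_{i+\frac12}[\Sigma_q,\Sigma_p]=\alpha_{i+1}^p .$$ Then there exists $r\in[0,1]$, the same for $p=1$ and $p=2$, such that for every $p\neq q\in\{1,2\}$ $$\mathcal{P}_{i+\frac12}[\Sigma_p,\Sigma_p]=r\max(\alpha_i^p-\alpha_{i+1}^q,0)+(1-r)\min(\alpha_i^p,\alpha_{i+1}^p),$$ $$\mathcal{P}_{i+\frac12}[\Sigma_p,\Sigma_q]=r\min(\alpha_i^p,\alpha_{i+1}^q)+(1-r)\max(\alpha_i^p-\alpha_{i+1}^p,0).$$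
   Context: This arises in the Discrete Equation Method for two-phase flow: $\alpha_j^p$ is the (ensemble-averaged) volume fraction of phase $p$ in cell $j$, and the parameter $r$ may depend on the interface location and time but not on the phase index. The pair $(\min(\alpha_i^p,\alpha_{i+1}^p),\max(\alpha_i^p-\alpha_{i+1}^p,0))$ corresponds to stratified flow and $(\max(\alpha_i^p-\alpha_{i+1}^q,0),\min(\alpha_i^p,\alpha_{i+1}^q))$ to disperse flow. *)

(* Defs.v *)
From HB Require Import structures.
From mathcomp Require Import all_boot all_order all_algebra.
From mathcomp Require Import all_classical all_reals all_analysis.
Set Implicit Arguments. Unset Strict Implicit. Unset Printing Implicit Defensive.
Import Order.TTheory GRing.Theory Num.Theory.
Local Open Scope classical_set_scope.
Local Open Scope ring_scope.

(* Phases are indexed by 'I_2 (phase 1 = ord0, phase 2 = ord_max).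
   On a probability space (T, P), [lphase w] (resp. [rphase w]) is the phase
   present immediately to the left (resp. right) of the interface x_{i+1/2}
   in realization w; exactly one phase is present on each side.
   [Pint P lphase rphase a b] = P_{i+1/2}[Sigma_a, Sigma_b]. *)
Definition Pint d (T : measurableType d) (R : realType) (P : probability T R)
  (lphase rphase : T -> 'I_2) (a b : 'I_2) : R :=
  fine (P [set w | lphase w = a /\ rphase w = b]).

(* Main.v *)
Require Import Defs.
From HB Require Import structures.
From mathcomp Require Import all_boot all_order all_algebra.
From mathcomp Require Import all_classical all_reals all_analysis.
From mathcomp Require Import ring lra.
Import Order.TTheory GRing.Theory Num.Theory.
Local Open Scope classical_set_scope.
Local Open Scope ring_scope.

Lemma I2_cases (p q : 'I_2) : p != q ->
  (p = ord0 /\ q = ord_max) \/ (p = ord_max /\ q = ord0).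
Proof.
case: p => [[|[|//]] hp]; case: q => [[|[|//]] hq] //= _.
- by left; split; apply/val_inj.
- by right; split; apply/val_inj.
Qed.

Theorem theorem1 (R : realType) (d : measure_display) (T : measurableType d)
  (P : probability T R) (lphase rphase : T -> 'I_2)
  (alphaL alphaR : 'I_2 -> R) :
  (forall a b : 'I_2, measurable [set w | lphase w = a /\ rphase w = b]) ->
  (forall p, 0 <= alphaL p <= 1) -> (forall p, 0 <= alphaR p <= 1) ->
  alphaL ord0 + alphaL ord_max = 1 -> alphaR ord0 + alphaR ord_max = 1 ->
  (forall p q : 'I_2, p != q ->
     Pint P lphase rphase p p + Pint P lphase rphase p q = alphaL p /\
     Pint P lphase rphase p p + Pint P lphase rphase q p = alphaR p) ->
  exists r : R, 0 <= r <= 1 /\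
    forall p q : 'I_2, p != q ->
      Pint P lphase rphase p p =
        r * Num.max (alphaL p - alphaR q) 0 + (1 - r) * Num.min (alphaL p) (alphaR p) /\
      Pint P lphase rphase p q =
        r * Num.min (alphaL p) (alphaR q) + (1 - r) * Num.max (alphaL p - alphaR p) 0.
Proof.
move=> _ hL hR sL sR H.
have ge0 : forall a b, 0 <= Pint P lphase rphase a b.
  by move=> a b; rewrite /Pint fine_ge0 // measure_ge0.
have n01 : (ord0 : 'I_2) != ord_max by [].
have n10 : (ord_max : 'I_2) != ord0 by [].
have [e1 e2] := H _ _ n01.
have [e3 e4] := H _ _ n10.
set A := Pint P lphase rphase ord0 ord0 in e1 e2 e3 e4 *.
set B := Pint P lphase rphase ord0 ord_max in e1 e2 e3 e4 *.
set C := Pint P lphase rphase ord_max ord0 in e1 e2 e3 e4 *.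
set D := Pint P lphase rphase ord_max ord_max in e1 e2 e3 e4 *.
have gA := ge0 ord0 ord0; have gB := ge0 ord0 ord_max.
have gC := ge0 ord_max ord0; have gD := ge0 ord_max ord_max.
rewrite -/A -/B -/C -/D in gA gB gC gD.
set a := alphaL ord0 in e1 e2 e3 e4 sL *.
set b := alphaR ord_max in e1 e2 e3 e4 sR *.
have hL2 : alphaL ord_max = 1 - a by lra.
have hR1 : alphaR ord0 = 1 - b by lra.
have ha := hL ord0; have hb := hR ord_max.
rewrite -/a in ha; rewrite -/b in hb.
set lo := Num.max (a - (1 - b)) 0.
set hi := Num.min a b.
have loB : lo <= B by rewrite /lo ge_max; apply/andP; split; lra.
have Bhi : B <= hi by rewrite /hi le_min; apply/andP; split; lra.
have [r [hr Br]] : exists r, 0 <= r <= 1 /\ B = r * hi + (1 - r) * lo.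
  have [hl|hl] := eqVneq hi lo.
    exists 0; split; first by rewrite lexx ler01.
    rewrite hl in Bhi; lra.
  have hp : 0 < hi - lo.
    rewrite subr_gt0 lt_neqAle eq_sym hl /=; exact: le_trans Bhi.
  exists ((B - lo) / (hi - lo)); split.
    apply/andP; split; first by apply: divr_ge0; lra.
    by rewrite ler_pdivrMr // mul1r; lra.
  have hn : hi - lo != 0 by rewrite lt0r_neq0.
  by field.
exists r; split => // p q /I2_cases [[-> ->]|[-> ->]];
  rewrite ?hL2 ?hR1 -/a -/b -/A -/B -/C -/D; clearbody A B C D a b.
- have x1 : Num.max (a - b) 0 = a - hi.
    by rewrite /hi; case: (leP a b) => h; case: (leP (a - b) 0) => h'; lra.
  have x2 : Num.min a (1 - b) = a - lo.
    by rewrite /lo; case: (leP a (1 - b)) => h; case: (leP (a - (1 - b)) 0) => h'; lra.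
  rewrite x1 x2 -/lo -/hi; split; last by [].
  have -> : A = a - B by lra.
  rewrite Br; ring.
- have x1 : Num.max (1 - a - (1 - b)) 0 = b - hi.
    by rewrite /hi; case: (leP a b) => h; case: (leP (1 - a - (1 - b)) 0) => h'; lra.
  have x2 : Num.min (1 - a) b = b - lo.
    by rewrite /lo; case: (leP (1 - a) b) => h; case: (leP (a - (1 - b)) 0) => h'; lra.
  have x3 : Num.min (1 - a) (1 - b) = 1 - b - a + hi.
    by rewrite /hi; case: (leP a b) => h; case: (leP (1 - a) (1 - b)) => h'; lra.
  have x4 : Num.max (1 - a - b) 0 = 1 - b - a + lo.
    by rewrite /lo; case: (leP (a - (1 - b)) 0) => h; case: (leP (1 - a - b) 0) => h'; lra.
  rewrite x1 x2 x3 x4.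
  have -> : D = b - B by lra.
  have -> : C = 1 - b - a + B by lra.
  rewrite Br; split; ring.
Qed.
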